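(* Let $D\in\mathbb{D}^n_+$, $W\in\mathbb{R}^{n\times n}$, $u\in\mathbb{R}^n$, and define $f_1(x)=-Dx+[Wx+u]_0^1$. Suppose $W-D$ is Lyapunov diagonally stable. Then there exists a unique $x^\star\in\mathbb{R}^n$ such that $f_1(x^\star)=0$. In particular, for each $u$, the linear-threshold network $\dot x=-Dx+[Wx+u]_0^1$ admits a unique equilibrium.
   Context: $\mathbb{D}^n_+$ is the set of $n\times n$ diagonal matrices with positive diagonal entries. $[z]_0^1=\max(0,\min(z,1))$, applied elementwise to vectors. A matrix $M$ is Lyapunov diagonally stable if $M^\top\Lambda+\Lambda M\prec0$ for some $\Lambda\in\mathbb{D}^n_+$. *)

(* Defs.v *)
From mathcomp Require Import all_boot all_order all_algebra.
Set Implicit Arguments. Unset Strict Implicit. Unset Printing Implicit Defensive.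
Import Order.TTheory GRing.Theory Num.Theory.
Local Open Scope ring_scope.

Definition posdiag (R : realFieldType) (n : nat) (D : 'M[R]_n) : Prop :=
  is_diag_mx D /\ forall i : 'I_n, 0 < D i i.

Definition negdef (R : realFieldType) (n : nat) (A : 'M[R]_n) : Prop :=
  forall x : 'cV[R]_n, x != 0 -> (x^T *m A *m x) 0 0 < 0.

Definition lyap_diag_stable (R : realFieldType) (n : nat) (M : 'M[R]_n) : Prop :=
  exists L : 'M[R]_n, posdiag L /\ negdef (M^T *m L + L *m M).

Definition clip01 (R : realFieldType) (z : R) : R := Num.max 0 (Num.min z 1).

Definition clip01v (R : realFieldType) (n : nat) (v : 'cV[R]_n) : 'cV[R]_n :=
  map_mx (@clip01 R) v.

Definition f1 (R : realFieldType) (n : nat) (D W : 'M[R]_n) (u x : 'cV[R]_n)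
  : 'cV[R]_n := - (D *m x) + clip01v (W *m x + u).

(* Main.v *)
Require Import Defs.
From mathcomp Require Import all_boot all_order all_algebra.
From mathcomp Require Import reals.
Import Order.TTheory GRing.Theory Num.Theory.
Local Open Scope ring_scope.
From mathcomp Require Import all_boot all_order all_algebra.
From mathcomp Require Import ring lra.
Set Implicit Arguments. Unset Strict Implicit.
Import Order.TTheory GRing.Theory Num.Theory.
Local Open Scope ring_scope.

Section Clip.
Variable R : realFieldType.
Implicit Types a b z t : R.

Lemma clip_cases z :
  (z <= 0 /\ clip01 z = 0) \/ ((0 <= z <= 1) /\ clip01 z = z) \/ (1 <= z /\ clip01 z = 1).
Proof.
rewrite /clip01; case: (leP z 1) => h1.
  case: (leP 0 z) => h0.
    by right; left; split => //; apply/andP.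
  by left; split => //; exact: ltW.
by right; right; rewrite max_r ?ler01 //; split => //; exact: ltW.
Qed.

Lemma clip_mono a b :
  0 <= (clip01 a - clip01 b) * ((a - b) - (clip01 a - clip01 b)).
Proof.
case: (clip_cases a) => [[ha ->]|[[/andP[ha1 ha2] ->]|[ha ->]]];
case: (clip_cases b) => [[hb ->]|[[/andP[hb1 hb2] ->]|[hb ->]]]; nra.
Qed.

Lemma clip_lip a b : (clip01 a - clip01 b) ^+ 2 <= (a - b) ^+ 2.
Proof.
have := clip_mono a b; set d := clip01 a - clip01 b => h.
rewrite -subr_ge0.
have -> : (a - b) ^+ 2 - d ^+ 2 = (a - b - d) ^+ 2 + 2 * (d * (a - b - d)) by ring.
by apply: addr_ge0; [exact: sqr_ge0 | apply: mulr_ge0].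
Qed.

Lemma clip_fix a b t : 0 < t -> a = clip01 (a - t * (a - b)) -> a = clip01 b.
Proof.
move=> t0.
case: (clip_cases (a - t * (a - b))) => [[ha ->]|[[/andP[ha1 ha2] ->]|[ha ->]]] ea;
case: (clip_cases b) => [[hb ->]|[[/andP[hb1 hb2] ->]|[hb ->]]]; nra.
Qed.
End Clip.

Section Quad.
Variable R : realFieldType.

Definition N2 n (v : 'cV[R]_n) : R := \sum_i v i 0 ^+ 2.
Definition Qf n (A : 'M[R]_n) (x : 'cV[R]_n) : R := \sum_i \sum_j x i 0 * A i j * x j 0.

Lemma dotE n (u v : 'cV[R]_n) : (u^T *m v) 0 0 = \sum_i u i 0 * v i 0.
Proof. by rewrite mxE; apply: eq_bigr => i _; rewrite mxE. Qed.

Lemma QfE n (A : 'M[R]_n) x : (x^T *m A *m x) 0 0 = Qf A x.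
Proof.
rewrite mxE /Qf exchange_big; apply: eq_bigr => j _.
rewrite mxE mulr_suml; apply: eq_bigr => i _; by rewrite mxE.
Qed.

Lemma N2_ge0 n (v : 'cV[R]_n) : 0 <= N2 v.
Proof. by apply: sumr_ge0 => i _; rewrite sqr_ge0. Qed.

Lemma coord_le_N2 n (v : 'cV[R]_n) i : v i 0 ^+ 2 <= N2 v.
Proof.
rewrite /N2 (bigD1 i) //= lerDl; apply: sumr_ge0 => j _; exact: sqr_ge0.
Qed.

Lemma N2_le n (v : 'cV[R]_n) c : (forall i, `|v i 0| <= c) -> N2 v <= n%:R * c ^+ 2.
Proof.
move=> h; rewrite /N2.
have -> : n%:R * c ^+ 2 = \sum_(i < n) c ^+ 2 by rewrite sumr_const card_ord mulr_natl.
apply: ler_sum => i _; rewrite -real_normK ?num_real //.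
have := h i; have := normr_ge0 (v i 0); nra.
Qed.

Lemma Qf_upper n (A : 'M[R]_n) : exists2 K, 0 <= K & forall x, Qf A x <= K * N2 x.
Proof.
exists (\sum_i \sum_j `|A i j|); first by apply: sumr_ge0 => i _; apply: sumr_ge0.
move=> x; rewrite /Qf mulr_suml; apply: ler_sum => i _; rewrite mulr_suml.
apply: ler_sum => j _.
have hi := coord_le_N2 x i; have hj := coord_le_N2 x j.
have := ler_norm (x i 0 * A i j * x j 0).
rewrite !normrM => h; apply: (le_trans h).
have hA := normr_ge0 (A i j).
have hxi := normr_ge0 (x i 0); have hxj := normr_ge0 (x j 0).
rewrite -[x i 0 ^+ 2]real_normK ?num_real // in hi.
rewrite -[x j 0 ^+ 2]real_normK ?num_real // in hj.
have hxx : `|x i 0| * `|x j 0| <= N2 x.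
  have := sqr_ge0 (`|x i 0| - `|x j 0|); nra.
have -> : `|x i 0| * `|A i j| * `|x j 0| = `|A i j| * (`|x i 0| * `|x j 0|) by ring.
by rewrite ler_wpM2l.

Qed.
End Quad.
From HB Require Import structures.
From mathcomp Require Import all_classical all_reals all_analysis.
Import numFieldNormedType.Exports.
Local Open Scope classical_set_scope.
Local Open Scope ring_scope.

HB.instance Definition _ (R : realType) m n := Complete.on 'M[R]_(m,n).

Lemma half_contr_fix (R : realType) (n : nat) (f : 'cV[R]_n -> 'cV[R]_n) :
  (forall x y, `|f x - f y| <= 2^-1 * `|x - y|) -> exists p, f p = p.
Proof.
move=> H.
have fT : {homo f : x / [set: 'cV[R]_n] x >-> [set: 'cV[R]_n] x} by [].
pose g := mkfun_fun fT.
have q0 : 0 <= (2^-1 : R) by rewrite invr_ge0.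
have : is_contraction g.
  exists (NngNum q0); split; first by rewrite /= invf_lt1 // ltr1n.
  move=> [x y] /= _; exact: H.
move=> /(@banach_fixed_point R _ setT g) [] //.
- by exists 0.
by move=> p _ hp; exists p; rewrite [in RHS]hp.
Qed.

Lemma coord_le_norm (R : realType) m k (x : 'M[R]_(m, k)) i j : `|x i j| <= `|x|.
Proof.
rewrite [leRHS]/Num.norm /= mx_normrE.
by apply/bigmax_geP; right; exists (i, j).
Qed.

Lemma norm_le_N2 (R : realType) n (v : 'cV[R]_n) : `|v| ^+ 2 <= N2 v.
Proof.
have [v0|] := eqVneq `|v| 0.
  by rewrite v0 expr0n /=; exact: N2_ge0.
rewrite /Num.norm /= => /mx_norm_neq0 [[i j] /= ->].
rewrite [j]ord1 real_normK ?num_real //; exact: coord_le_N2.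
Qed.

Definition qf (R : numDomainType) n (S : 'M[R]_n) (v : 'rV[R]_n) : R :=
  \sum_i \sum_j v 0 i * S i j * v 0 j.

Lemma qf_cont (R : realType) n (S : 'M[R]_n) : continuous (@qf R n S).
Proof.
rewrite /qf.
apply: continuous_big => [|i _].
  exact: add_continuous.
apply: continuous_big => [|j _].
  exact: add_continuous.
move=> v.
apply: (@continuousM R _ (fun x : 'rV[R]_n => x 0 i * S i j) (fun x => x 0 j)); last exact: coord_continuous.
apply: (@continuousM R _ (fun x : 'rV[R]_n => x 0 i) (fun x => S i j)); last exact: cst_continuous.
exact: coord_continuous.
Qed.

Lemma qfZ (R : numDomainType) n (S : 'M[R]_n) a v : qf S (a *: v) = a ^+ 2 * qf S v.
Proof.
rewrite /qf mulr_sumr; apply: eq_bigr => i _; rewrite mulr_sumr; apply: eq_bigr => j _.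
rewrite !mxE; ring.
Qed.

Lemma posdef_unif (R : realType) n (S : 'M[R]_n) :
  (forall v : 'rV[R]_n, v != 0 -> 0 < qf S v) ->
  exists2 mu : R, 0 < mu & forall v, mu * `|v| ^+ 2 <= qf S v.
Proof.
move=> pd.
case: n S pd => [|n] S pd.
  exists 1 => // v; rewrite (_ : v = 0); first by rewrite normr0 expr0n /= mulr0 /qf big_ord0.
  by apply/rowP => -[].
pose A := [set v : 'rV[R]_n.+1 | `|v| = 1].
have A0 : A !=set0.
  pose w : 'rV[R]_n.+1 := const_mx 1.
  have w0 : w != 0 by apply/negP => /eqP/rowP/(_ ord0); rewrite !mxE => /eqP; rewrite oner_eq0.
  exists (`|w|^-1 *: w); rewrite /A /= normrZ normfV normr_id mulVf //.
  by rewrite normr_eq0.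
have cA : compact A.
  apply: bounded_closed_compact.
    exists 1; split => // M /= M1 v; rewrite /A /= => ->; exact: ltW.
  rewrite /A (_ : mkset _ = Num.norm @^-1` [set 1]) //.
  apply: preimage_closed; last exact: closed_eq.
  by move=> x _; exact: norm_continuous.
have [c cA' cmin] := compact_EVT_min A0 cA (continuous_subspaceT (@qf_cont R _ S)).
have c1 : `|c| = 1 by move: cA'; rewrite inE.
exists (qf S c).
  apply: pd; apply/negP => /eqP c0; move: c1; rewrite c0 normr0 => /eqP; rewrite eq_sym oner_eq0.
  done.
move=> v; have [->|v0] := eqVneq v 0.
  by rewrite normr0 expr0n /= mulr0 /qf big1 // => i _; rewrite big1 // => j _; rewrite mxE !mul0r.
have nv : 0 < `|v| by rewrite normr_gt0.
have := cmin (`|v|^-1 *: v); rewrite inE /A /= normrZ normfV normr_id mulVf ?gt_eqF //.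
move=> /(_ erefl); rewrite qfZ => h.
rewrite mulrC -ler_pdivlMl ?exprn_gt0 //.
by rewrite exprVn in h.
Qed.

Lemma posdef_unifc (R : realType) n (S : 'M[R]_n) :
  (forall x : 'cV[R]_n, x != 0 -> 0 < Qf S x) ->
  exists2 mu : R, 0 < mu & forall x, mu * N2 x <= Qf S x.
Proof.
move=> pd.
have qfQ x : qf S x^T = Qf S x.
  by rewrite /qf /Qf; apply: eq_bigr => i _; apply: eq_bigr => j _; rewrite !mxE.
have [mu mu0 Hmu] : exists2 mu : R, 0 < mu & forall v, mu * `|v| ^+ 2 <= qf S v.
  apply: posdef_unif => v v0; rewrite -(trmxK v) qfQ; apply: pd.
  by apply: contra v0 => /eqP h; rewrite -(trmxK v) h trmx0.
exists (mu / (n%:R + 1)); first by rewrite divr_gt0 // ltr_pwDr // ler0n.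
move=> x; rewrite -qfQ; apply: le_trans (Hmu x^T).
have hN : N2 x <= n%:R * `|x^T| ^+ 2.
  by apply: N2_le => i; have := coord_le_norm x^T 0 i; rewrite mxE.
have hn : 0 < n%:R + 1 :> R by rewrite ltr_pwDr // ler0n.
rewrite mulrAC ler_pdivrMr //.
have h2 : 0 <= `|x^T| ^+ 2 by rewrite sqr_ge0.
have hn0 : 0 <= n%:R :> R by rewrite ler0n.
have hNN := N2_ge0 x.
nra.
Qed.

Lemma bernoulli_ineq (R : realFieldType) (x : R) k : 0 <= x -> 1 + k%:R * x <= (1 + x) ^+ k.
Proof.
move=> x0; elim: k => [|k ih]; first by rewrite mul0r addr0 expr0.
rewrite exprS -natr1.
have hk : 0 <= k%:R :> R by rewrite ler0n.
have : (1 + x) * (1 + k%:R * x) <= (1 + x) * (1 + x) ^+ k by rewrite ler_wpM2l // addr_ge0.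
nra.
Qed.

Lemma geo_small (R : realType) (rho c : R) : 0 <= rho -> rho < 1 -> 0 <= c ->
  exists k, rho ^+ k * c <= 1.
Proof.
move=> r0 r1 c0.
have [->|rpos] := eqVneq rho 0.
  by exists 1%N; rewrite expr1 mul0r.
have rp : 0 < rho by rewrite lt_def rpos r0.
pose dl := rho^-1 - 1.
have dl0 : 0 < dl by rewrite subr_gt0 invf_gt1.
have hb := @archi_boundP R (c / dl) (divr_ge0 c0 (ltW dl0)).
set k := Num.Def.archi_bound _ in hb.
exists k.
have hk : c <= (1 + dl) ^+ k.
  apply: le_trans (bernoulli_ineq k (ltW dl0)).
  move: hb; rewrite ltr_pdivrMr // => hb.
  have : 0 <= 1 :> R by []; lra.
have e1 : 1 + dl = rho^-1 by rewrite /dl addrC subrK.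
rewrite e1 in hk.
apply: (le_trans (ler_wpM2l (exprn_ge0 k r0) hk)).
by rewrite -exprMn mulfV // expr1n.
Qed.

Lemma diag_mulE (R : numDomainType) n (d : 'rV[R]_n) (v : 'cV[R]_n) i :
  (diag_mx d *m v) i 0 = d 0 i * v i 0.
Proof. by rewrite mul_diag_mx mxE. Qed.

Lemma entryBB (R : numDomainType) n (A B C : 'cV[R]_n) i :
  (A - B - C) i 0 = A i 0 - B i 0 - C i 0.
Proof. by rewrite !mxE. Qed.

Lemma entryD (R : numDomainType) n (A B : 'cV[R]_n) i : (A + B) i 0 = A i 0 + B i 0.
Proof. by rewrite mxE. Qed.
Lemma entryB (R : numDomainType) n (A B : 'cV[R]_n) i : (A - B) i 0 = A i 0 - B i 0.
Proof. by rewrite !mxE. Qed.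
Lemma entryN (R : numDomainType) n (A : 'cV[R]_n) i : (- A) i 0 = - A i 0.
Proof. by rewrite !mxE. Qed.
Lemma entryZ (R : numDomainType) n (a : R) (A : 'cV[R]_n) i : (a *: A) i 0 = a * A i 0.
Proof. by rewrite !mxE. Qed.
Lemma entry_clip (R : realFieldType) n (A : 'cV[R]_n) i : (clip01v A) i 0 = clip01 (A i 0).
Proof. by rewrite !mxE. Qed.
Lemma oppE11 (R : numDomainType) (X : 'M[R]_1) : (- X) 0 0 = - X 0 0.
Proof. by rewrite mxE. Qed.

Unset Implicit Arguments.
Unset Strict Implicit.

Theorem proposition1 (R : realType) (n : nat) (D W : 'M[R]_n) (u : 'cV[R]_n) :
  posdiag D -> lyap_diag_stable (W - D) ->
  exists! xs : 'cV[R]_n, f1 D W u xs = 0.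
Proof.
move=> [/diag_mxP [d ->] dpos] [L [[/diag_mxP [l ->] lpos] nd]].
have dp i : 0 < d 0 i by have := dpos i; rewrite mxE eqxx mulr1n.
have lp i : 0 < l 0 i by have := lpos i; rewrite mxE eqxx mulr1n.
set Dm := diag_mx d; set Lm := diag_mx l; set M := W - Dm.
have hneg (h : 'cV[R]_n) : h != 0 -> (h^T *m (Lm *m M) *m h) 0 0 < 0.
  move=> h0; have := nd h h0.
  rewrite mulmxDr mulmxDl mxE.
  have -> : (h^T *m (M^T *m Lm) *m h) 0 0 = (h^T *m (Lm *m M) *m h) 0 0.
    have tr1 (X : 'M[R]_1) : X 0 0 = X^T 0 0 by rewrite mxE.
    by rewrite [LHS]tr1 !trmx_mul trmxK trmxK /Lm tr_diag_mx !mulmxA.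
  by rewrite /Lm /M /Dm => H; lra.
have uniq (x y : 'cV[R]_n) : f1 Dm W u x = 0 -> f1 Dm W u y = 0 -> x = y.
  move=> fx fy; apply/eqP; rewrite -subr_eq0; apply/negPn/negP => hne.
  have := hneg _ hne; rewrite ltNge => /negP; apply.
  set h := x - y.
  have -> : (h^T *m (Lm *m M) *m h) = ((Lm *m h)^T *m (M *m h)).
    by rewrite trmx_mul /Lm tr_diag_mx !mulmxA.
  rewrite dotE; apply: sumr_ge0 => i _.
  rewrite /Lm diag_mulE.
  have ex : (Dm *m x) i 0 = clip01 ((W *m x + u) i 0).
    by move/eqP: fx; rewrite /f1 addrC subr_eq0 => /eqP <-; rewrite mxE.
  have ey : (Dm *m y) i 0 = clip01 ((W *m y + u) i 0).
    by move/eqP: fy; rewrite /f1 addrC subr_eq0 => /eqP <-; rewrite mxE.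
  rewrite /Dm !diag_mulE in ex ey.
  have hM : (M *m h) i 0 = ((W *m x + u) i 0 - (W *m y + u) i 0) - d 0 i * h i 0.
    have hM' : M *m h = (W *m x + u) - (W *m y + u) - Dm *m h.
      by rewrite /M /h mulmxBl mulmxBr opprD addrACA subrr addr0.
    by rewrite hM' entryBB /Dm diag_mulE.
  have hh : d 0 i * h i 0 = clip01 ((W *m x + u) i 0) - clip01 ((W *m y + u) i 0).
    by rewrite -ex -ey /h !mxE; ring.
  rewrite hM.
  have := clip_mono ((W *m x + u) i 0) ((W *m y + u) i 0).
  rewrite -hh.
  have := dp i; have := lp i; nra.
pose Di := diag_mx (\row_i (d 0 i)^-1).
pose Cm := diag_mx (\row_i (l 0 i / d 0 i)).
have DDi : Dm *m Di = 1%:M.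
  rewrite /Dm /Di mulmx_diag -diag_const_mx; congr diag_mx; apply/rowP => i.
  by rewrite !mxE mulfV // gt_eqF.
have DDe (v : 'cV[R]_n) : Dm *m (Di *m v) = v by rewrite mulmxA DDi mul1mx.
have CmE : Cm = Di *m Lm.
  rewrite /Cm /Di /Lm mulmx_diag; congr diag_mx; apply/rowP => i.
  by rewrite !mxE mulrC.
pose G := Cm *m M *m Di.
have Gpos (e : 'cV[R]_n) : e != 0 -> 0 < Qf (- G) e.
  move=> e0; rewrite -QfE mulmxN mulNmx oppE11 oppr_gt0.
  have -> : e^T *m G *m e = (Di *m e)^T *m (Lm *m M) *m (Di *m e).
    by rewrite /G CmE trmx_mul /Di tr_diag_mx !mulmxA.
  apply: hneg; apply: contra e0 => /eqP h; by rewrite -(DDe e) h mulmx0.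
have [mu mu0 Hmu] := posdef_unifc Gpos.
have [K K0 HK] := Qf_upper (G^T *m G).
pose K' := K + mu ^+ 2 + 1.
have K'0 : 0 < K' by rewrite /K'; have := sqr_ge0 mu; lra.
pose tau := mu / K'.
have tau0 : 0 < tau by rewrite divr_gt0.
have tauK : tau * K' = mu by rewrite /tau divfK // gt_eqF.
have tm1 : tau * mu < 1.
  rewrite /tau mulrAC -expr2 ltr_pdivrMr // mul1r /K'; lra.
pose rho := 1 - tau * mu.
have rho0 : 0 <= rho by rewrite /rho subr_ge0 ltW.
have rho1 : rho < 1 by rewrite /rho; have := mulr_gt0 tau0 mu0; lra.
pose cu := Cm *m u.
pose T (p : 'cV[R]_n) := clip01v (p + tau *: (G *m p + cu)).
have Tcontr p q : N2 (T p - T q) <= rho * N2 (p - q).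
  set e := p - q.
  have step1 : N2 (T p - T q) <= N2 (e + tau *: (G *m e)).
    apply: ler_sum => i _.
    rewrite entryB !entry_clip.
    have -> : (e + tau *: (G *m e)) i 0 =
       (p + tau *: (G *m p + cu)) i 0 - (q + tau *: (G *m q + cu)) i 0.
      by rewrite /e mulmxBr !entryD !entryZ !entryD !entryN; ring.
    exact: clip_lip.
  have step2 : N2 (e + tau *: (G *m e)) = N2 e + 2 * tau * Qf G e + tau ^+ 2 * Qf (G^T *m G) e.
    have hd1 : Qf G e = \sum_i e i 0 * (G *m e) i 0 by rewrite -QfE -mulmxA dotE.
    have hd2 : Qf (G^T *m G) e = \sum_i (G *m e) i 0 * (G *m e) i 0.
      by rewrite -QfE -dotE [(G *m e)^T]trmx_mul !mulmxA.
    rewrite hd1 hd2 /N2 !mulr_sumr -!big_split /=; apply: eq_bigr => i _.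
    rewrite entryD entryZ; ring.
  have Q1 : Qf G e <= - (mu * N2 e).
    have := Hmu e; rewrite -!QfE mulmxN mulNmx oppE11; lra.
  have Q2 := HK e.
  have hN := N2_ge0 e.
  have h1 : tau * Qf G e <= tau * - (mu * N2 e) by apply: ler_wpM2l => //; exact: ltW.
  have t2 : 0 <= tau ^+ 2 by exact: sqr_ge0.
  have h2 : tau ^+ 2 * Qf (G^T *m G) e <= tau ^+ 2 * (K * N2 e) by apply: ler_wpM2l.
  have KK : K <= K' by rewrite /K'; have := sqr_ge0 mu; lra.
  have h3 : tau ^+ 2 * (K * N2 e) <= tau ^+ 2 * (K' * N2 e).
    by apply: ler_wpM2l => //; apply: ler_wpM2r.
  have h4 : tau ^+ 2 * (K' * N2 e) = tau * mu * N2 e by rewrite -tauK; ring.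
  apply: (le_trans step1); rewrite step2 /rho; lra.
have Titer k p q : N2 (iter k T p - iter k T q) <= rho ^+ k * N2 (p - q).
  elim: k => [|k ih]; first by rewrite expr0 mul1r.
  apply: (le_trans (Tcontr _ _)); rewrite exprS -mulrA ler_wpM2l //.
have [k hk] := geo_small rho0 rho1 (mulr_ge0 (ler0n R 4) (ler0n R n)).
pose Tk := iter k T.
have Tkc (p q : 'cV[R]_n) : `|Tk p - Tk q| <= 2^-1 * `|p - q|.
  have a1 := norm_le_N2 (Tk p - Tk q).
  have a2 := Titer k p q.
  have a3 : N2 (p - q) <= n%:R * `|p - q| ^+ 2.
    by apply: N2_le => i; exact: coord_le_norm.
  have a4 : rho ^+ k * N2 (p - q) <= rho ^+ k * (n%:R * `|p - q| ^+ 2).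
    by rewrite ler_wpM2l // exprn_ge0.
  have a5 : rho ^+ k * (n%:R * `|p - q| ^+ 2) <= 4^-1 * `|p - q| ^+ 2.
    rewrite mulrA; rewrite ler_wpM2r ?sqr_ge0 //.
    have e4 : rho ^+ k * (4 * n%:R) = 4 * (rho ^+ k * n%:R) by ring.
    rewrite e4 in hk; lra.
  have b1 := normr_ge0 (Tk p - Tk q); have b2 := normr_ge0 (p - q).
  rewrite -(@ler_pXn2r _ 2) //; last by rewrite nnegrE mulr_ge0 // invr_ge0.
  have e2 : (2^-1 : R) ^+ 2 = 4^-1 by rewrite expr2; field.
  rewrite exprMn e2; lra.
have [p hp] := half_contr_fix Tkc.
have Tp : T p = p.
  have : `|T p - p| <= 2^-1 * `|T p - p|.
    have hp' : iter k T p = p := hp.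
    have e1 : Tk (T p) = T p by rewrite /Tk -iterSr iterS hp'.
    by rewrite -{1}e1 -{2}hp; exact: Tkc.
  have := normr_ge0 (T p - p) => h0 h1.
  have : `|T p - p| = 0 by lra.
  by move/eqP; rewrite normr_eq0 subr_eq0 => /eqP.
suff fx : f1 Dm W u (Di *m p) = 0.
  by exists (Di *m p); split => // y fy; exact: uniq fx fy.
apply/colP => i; rewrite /f1 entryD entryN DDe entry_clip [RHS]mxE.
have hpi := congr1 (fun A : 'cV[R]_n => A i 0) Tp.
rewrite /= /T entry_clip in hpi.
have eG : G *m p + cu = Cm *m ((W *m (Di *m p) + u) - p).
  rewrite /G /cu /M -!mulmxA mulmxBl DDe -mulmxDr; congr (_ *m _).
  by rewrite addrAC.
rewrite eG entryD entryZ /Cm diag_mulE entryB mxE in hpi.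
set a := p i 0 in hpi *; set b := (W *m (Di *m p) + u) i 0 in hpi *.
have t0 : 0 < tau * (l 0 i / d 0 i) by rewrite mulr_gt0 // divr_gt0.
have e2 : a + tau * (l 0 i / d 0 i * (b - a)) = a - tau * (l 0 i / d 0 i) * (a - b) by ring.
rewrite e2 in hpi.
have := clip_fix t0 (esym hpi) => <-. 
by rewrite addNr.
Qed.
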